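(* Let $K\to K'$ be an algebraically pure morphism of fields and $x=(x_1,\ldots,x_n)$. Let $J_1,\ldots,J_p$ be subsets of $\{1,\ldots,n\}$, $x_{J_i}=(x_k)_{k\in J_i}$, and $A_i=K[x_{J_i}]_{(x_{J_i})}$, $A'_i=K'[x_{J_i}]_{(x_{J_i})}$ for $i\in\{1,\ldots,p\}$. Set $\mathcal{N}=A_1\times\cdots\times A_p$ and $\mathcal{N}'=A'_1\times\cdots\times A'_p$. Let $f$ be a finite system of polynomials in $K[x]_{(x)}[Y]$, $Y=(Y_1,\ldots,Y_p)$, and let $\hat y\in\mathcal{N}'$ satisfy $f(\hat y)=0$ (in $K'[x]_{(x)}$). Then there exists $y\in\mathcal{N}$ such that $f(y)=0$ and $\operatorname{ord} y_i=\operatorname{ord}\hat y_i$ for all $i\in\{1,\ldots,p\}$.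
   Context: A ring morphism $A\to B$ is called algebraically pure if every finite system of polynomial equations over $A$ which has a solution in $B$ also has a solution in $A$. Here $K[x_{J}]_{(x_J)}$ denotes the localization of the polynomial ring $K[x_J]$ at the maximal ideal generated by the variables $x_J$. For an element $g$ of such a local ring (or of a power series ring), $\operatorname{ord} g$ is its order with respect to the maximal ideal $(x)$, i.e. the largest $k$ with $g\in (x)^k$ (equivalently the least degree of a monomial with nonzero coefficient in its power series expansion), with $\operatorname{ord}0=\infty$. *)

(* Defs.v *)
From HB Require Import structures.
From mathcomp Require Import all_boot all_order all_algebra.
From mathcomp Require Import fraction.
From mathcomp Require Import mpoly.
Set Implicit Arguments. Unset Strict Implicit. Unset Printing Implicit Defensive.
Import GRing.Theory.
Local Open Scope ring_scope.

Definition alg_pure (K K' : fieldType) (phi : {rmorphism K -> K'}) : Prop :=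
  forall (m : nat) (eqs : seq {mpoly K[m]}),
    (exists v : 'I_m -> K', all (fun q => (map_mpoly phi q).@[v] == 0) eqs) ->
    exists v : 'I_m -> K, all (fun q => q.@[v] == 0) eqs.

(* The fraction field K(x_1,...,x_n), ambient field of all local rings. *)
Notation FK K n := {fraction {mpoly K[n]}}.

Definition poly_in_vars (K : fieldType) (n : nat) (J : {set 'I_n})
    (P : {mpoly K[n]}) : bool :=
  all (fun m : 'X_{1..n} => [forall i : 'I_n, (i \notin J) ==> (m i == 0%N)])
      (msupp P).

(* z lies in the local ring K[x_J]_(x_J), viewed inside K(x):
   z = P/Q with P, Q in K[x_J] and Q not in (x_J), i.e. Q(0) <> 0. *)
Definition in_loc (K : fieldType) (n : nat) (J : {set 'I_n}) (z : FK K n) : Prop :=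
  exists P Q : {mpoly K[n]},
    [/\ poly_in_vars J P, poly_in_vars J Q, Q@_0%MM != 0 &
        z = tofrac P / tofrac Q].

(* z lies in (x)^k K[x]_(x): z = P/Q with Q(0) <> 0 and every monomial
   of P of total degree >= k. *)
Definition in_mpow (K : fieldType) (n : nat) (k : nat) (z : FK K n) : Prop :=
  exists P Q : {mpoly K[n]},
    [/\ Q@_0%MM != 0, (forall m, m \in msupp P -> (k <= mdeg m)%N) &
        z = tofrac P / tofrac Q].

(* has_ord z o : ord z = o, where None stands for infinity.
   ord z = largest k with z in (x)^k, and ord z = oo if z is in all (x)^k. *)
Definition has_ord (K : fieldType) (n : nat) (z : FK K n) (o : option nat) : Prop :=
  match o with
  | Some k => in_mpow k z /\ ~ in_mpow k.+1 z
  | None => forall k, in_mpow k z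
  end.

Definition map_frac (K K' : fieldType) (phi : {rmorphism K -> K'}) (n : nat)
    (z : FK K n) : FK K' n :=
  let r := repr z in
  tofrac (map_mpoly phi (frac r).1) / tofrac (map_mpoly phi (frac r).2).

(* Main.v *)
Require Import Defs.
From HB Require Import structures.
From mathcomp Require Import all_boot all_order all_algebra.
From mathcomp Require Import fraction.
From mathcomp Require Import mpoly.
From mathcomp.algebra_tactics Require Import ring.
From Stdlib Require Import IndefiniteDescription.
Set Implicit Arguments. Unset Strict Implicit. Unset Printing Implicit Defensive.
Import GRing.Theory.
Local Open Scope ring_scope.
Lemma pi_ratio (R : idomainType) (r : {ratio R}) :
  (\pi_({fraction R})%qT r) = tofrac (frac r).1 / tofrac (frac r).2.
Proof.
have hd := denom_ratioP r.
apply: (canRL (mulfK _)); first by rewrite tofrac_eq0.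
unlock tofrac. rewrite -[X in X = _]FracField.pi_mul.
apply/eqmodP; rewrite /= FracField.equivfE /FracField.mulf /=.
rewrite !numden_Ratio ?mulf_neq0 ?oner_neq0 //. by rewrite !mulr1 mulrC.
Qed.

Lemma frac_repr (R : idomainType) (z : {fraction R}) :
  z = tofrac (frac (repr z)).1 / tofrac (frac (repr z)).2.
Proof. by rewrite -pi_ratio reprK. Qed.

Lemma map_mpoly_neq0 (K K' : fieldType) (phi : {rmorphism K -> K'}) n (P : {mpoly K[n]}) :
  P != 0 -> map_mpoly phi P != 0.
Proof.
apply: contra => /eqP H; apply/eqP/mpolyP => m.
move/mpolyP: H => /(_ m); rewrite mcoeff_map_mpoly !mcoeff0 => /eqP.
by rewrite fmorph_eq0 => /eqP.
Qed.

Lemma map_fracE (K K' : fieldType) (phi : {rmorphism K -> K'}) n (A B : {mpoly K[n]}) :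
  B != 0 ->
  map_frac phi (tofrac A / tofrac B) = tofrac (map_mpoly phi A) / tofrac (map_mpoly phi B).
Proof.
move=> hB; rewrite /map_frac.
set z := tofrac A / tofrac B.
have hz := frac_repr z.
set a := (frac (repr z)).1 in hz *; set b := (frac (repr z)).2 in hz *.
have hb : b != 0 by exact: denom_ratioP.
have E : A * b = a * B.
  apply/eqP; rewrite -tofrac_eq !tofracM -eqr_div ?tofrac_eq0 //. by rewrite -hz.
apply/eqP; rewrite eqr_div ?tofrac_eq0 ?map_mpoly_neq0 // -!tofracM -!rmorphM E.
by rewrite mulrC.
Qed.

Lemma mcoeff0_neq0 (F : fieldType) n (Q : {mpoly F[n]}) : Q@_0%MM != 0 -> Q != 0.
Proof. by apply: contra => /eqP ->; rewrite mcoeff0. Qed.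

Lemma mcoeffM_low (F : fieldType) n (A B : {mpoly F[n]}) k1 k2 :
  (forall a, (mdeg a < k1)%N -> A@_a = 0) -> (forall b, (mdeg b < k2)%N -> B@_b = 0) ->
  forall s, (mdeg s < k1 + k2)%N -> (A * B)@_s = 0.
Proof.
move=> hA hB s hs; rewrite mpolyME raddf_sum /= big_allpairs.
apply: big1_seq => a /andP [_ ha]; apply: big1_seq => b /andP [_ hb].
rewrite mcoeffZ mcoeffX.
have la : (k1 <= mdeg a)%N.
  rewrite leqNgt; apply/negP => /hA; move: ha; rewrite mcoeff_msupp => /eqP; done.
have lb : (k2 <= mdeg b)%N.
  rewrite leqNgt; apply/negP => /hB; move: hb; rewrite mcoeff_msupp => /eqP; done.
case: eqP => [E|]; last by rewrite mulr0.
by move: hs; rewrite -E mdegD ltnNge leq_add.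
Qed.

Definition ordP (F : fieldType) n (P : {mpoly F[n]}) (o : option nat) : Prop :=
  match o with
  | None => P = 0
  | Some k => (forall s, (mdeg s < k)%N -> P@_s = 0) /\ exists s, mdeg s = k /\ P@_s != 0
  end.

Lemma in_mpow_frac (F : fieldType) n k (P Q : {mpoly F[n]}) : Q@_0%MM != 0 ->
  in_mpow k (tofrac P / tofrac Q) <-> (forall s, (mdeg s < k)%N -> P@_s = 0).
Proof.
move=> hQ; split; last first.
  move=> h; exists P, Q; split => // s; rewrite mcoeff_msupp => hs.
  rewrite leqNgt; apply/negP => /h; apply/eqP; done.
case=> P2 [Q2 [hQ2 hP2 E]].
have hQn := mcoeff0_neq0 hQ; have hQ2n := mcoeff0_neq0 hQ2.
have E2 : P * Q2 = P2 * Q.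
  apply/eqP; rewrite -tofrac_eq !tofracM -eqr_div ?tofrac_eq0 //; by rewrite E.
have lowP2 : forall a, (mdeg a < k)%N -> P2@_a = 0.
  move=> a ha; apply/eqP; rewrite mcoeff_eq0; apply/negP => /hP2; by rewrite leqNgt ha.
suff H : forall d s, mdeg s = d -> (d < k)%N -> P@_s = 0.
  by move=> s hs; exact: H _ _ erefl hs.
elim/ltn_ind => d IH s hs hdk.
set c := Q2@_0%MM.
have hsplit : Q2 = c%:MP + (Q2 - c%:MP) by rewrite addrC subrK.
have h1 : (P * Q2)@_s = P@_s * c.
  rewrite {1}hsplit mulrDr mcoeffD mulrC mcoeffCM.
  rewrite (@mcoeffM_low _ _ P _ d 1 _ _ s); first by rewrite addr0 mulrC.
  - move=> a ha; apply: (IH (mdeg a)) => //; exact: ltn_trans ha hdk.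
  - move=> b; rewrite ltnS leqn0 mdeg_eq0 => /eqP ->.
    by rewrite mcoeffB mcoeffC eqxx mulr1 subrr.
  - by rewrite hs addn1.
have h2 : (P2 * Q)@_s = 0.
  apply: (@mcoeffM_low _ _ P2 Q k 0) => //; by rewrite addn0 hs.
move: h1; rewrite E2 h2 => /esym /eqP; rewrite mulf_eq0 (negbTE hQ2) orbF.
by move/eqP.
Qed.

Lemma has_ord_frac (F : fieldType) n (P Q : {mpoly F[n]}) o0 : Q@_0%MM != 0 ->
  ordP P o0 -> forall o, has_ord (tofrac P / tofrac Q) o <-> o = o0.
Proof.
move=> hQ hP o; rewrite /has_ord.
case: o0 hP => [k0 [hlow [s0 [hs0 hnz]]]|hP0].
- have key : forall k, in_mpow k (tofrac P / tofrac Q) <-> (k <= k0)%N.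
    move=> k; rewrite in_mpow_frac //; split.
    + move=> h; rewrite leqNgt; apply/negP => hk; move: hnz; by rewrite h ?hs0 // eqxx.
    + move=> hk s hs; apply: hlow; exact: leq_trans hs hk.
  case: o => [k|]; split.
  + rewrite !key => -[h1 h2]; congr Some; apply/eqP; rewrite eqn_leq h1 /=.
    by rewrite -ltnS ltnNge; apply/negP.
  + by case=> ->; rewrite !key ltnn.
  + by move=> h; have := proj1 (key k0.+1) (h k0.+1); rewrite ltnn.
  + by [].
- rewrite (hP0 : P = 0).
  have key : forall k, in_mpow k (tofrac (0 : {mpoly F[n]}) / tofrac Q).
    by move=> k; rewrite in_mpow_frac // => s _; rewrite mcoeff0.
  case: o => [k|]; split => //.
  by case=> _ h; exfalso; apply: h; apply: key.
Qed.

Lemma ordP_ex (F : fieldType) n (P : {mpoly F[n]}) : exists o, ordP P o.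
Proof.
have [->|nz] := eqVneq P 0; first by exists None.
have ex : exists k, has (fun s => mdeg s == k) (msupp P).
  case E: (msupp P) => [|s r]; first by move: nz; rewrite -msupp_eq0 E.
  by exists (mdeg s); rewrite /= eqxx.
case: (ex_minnP ex) => k /hasP [s hs /eqP hk] hmin.
exists (Some k); split; last by exists s; rewrite -mcoeff_msupp.
move=> s' hs'; apply/eqP; rewrite mcoeff_eq0; apply/negP => hin.
suff: (k <= mdeg s')%N by rewrite leqNgt hs'.
by apply: hmin; apply/hasP; exists s'.
Qed.

Definition NDfold (S : comRingType) p (ms : seq 'X_{1..p}) (a b : 'X_{1..p} -> S)
    (P Q : 'I_p -> S) : S * S :=
  foldr (fun m acc => (a m * \prod_i P i ^+ m i * acc.2 + acc.1 * (b m * \prod_i Q i ^+ m i),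
                       b m * \prod_i Q i ^+ m i * acc.2)) (0, 1) ms.

Lemma NDfoldP (S : comRingType) (F : fieldType) (sg : {rmorphism S -> F}) p
    (ms : seq 'X_{1..p}) a b P Q :
  (forall m, m \in ms -> sg (b m) != 0) -> (forall i, sg (Q i) != 0) ->
  sg (NDfold ms a b P Q).2 != 0 /\
  \sum_(m <- ms) (sg (a m) / sg (b m)) * \prod_i (sg (P i) / sg (Q i)) ^+ m i
    = sg (NDfold ms a b P Q).1 / sg (NDfold ms a b P Q).2.
Proof.
move=> hb hQ; elim: ms hb => [|m ms IH] hb /=.
  by rewrite big_nil rmorph1 rmorph0 oner_neq0 mul0r.
have [|hD hS] := IH; first by move=> m' h; apply: hb; rewrite inE h orbT.
have hdm : sg (b m * \prod_i Q i ^+ m i) != 0.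
  rewrite rmorphM rmorph_prod mulf_neq0 ?hb ?mem_head //.
  by apply/prodf_neq0 => i _; rewrite rmorphXn expf_neq0.
split; first by rewrite rmorphM mulf_neq0.
rewrite big_cons hS.
have -> : sg (a m) / sg (b m) * \prod_i (sg (P i) / sg (Q i)) ^+ m i =
          sg (a m * \prod_i P i ^+ m i) / sg (b m * \prod_i Q i ^+ m i).
  rewrite !rmorphM !rmorph_prod /= -mulf_div; congr (_ * _).
  rewrite -prodf_div; apply: eq_bigr => i _; by rewrite !rmorphXn expr_div_n.
by rewrite addf_div // -!rmorphM -rmorphD.
Qed.

Lemma coef_sumX (R : nzRingType) n (L : seq 'X_{1..n}) (c : 'I_(size L) -> R) s :
  (\sum_(j < size L) c j *: 'X_[nth 0%MM L j])@_s
    = \sum_(j < size L | nth 0%MM L j == s) c j.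
Proof.
rewrite raddf_sum /= [RHS]big_mkcond /=. apply: eq_bigr => j _.
by rewrite mcoeffZ mcoeffX; case: eqP => _; rewrite ?mulr1 ?mulr0.
Qed.

Lemma coef_sumX_nth (R : nzRingType) n (L : seq 'X_{1..n}) (c : 'I_(size L) -> R) (j0 : 'I_(size L)) :
  uniq L -> (\sum_(j < size L) c j *: 'X_[nth 0%MM L j])@_(nth 0%MM L j0) = c j0.
Proof.
move=> hL; rewrite coef_sumX (big_pred1 j0) // => j /=.
by rewrite nth_uniq // eqE.
Qed.

Lemma coef_sumX_out (R : nzRingType) n (L : seq 'X_{1..n}) (c : 'I_(size L) -> R) s :
  s \notin L -> (\sum_(j < size L) c j *: 'X_[nth 0%MM L j])@_s = 0.
Proof.
move=> hs; rewrite coef_sumX big_pred0 // => j.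
apply/negP => /eqP E; move: hs; by rewrite -E mem_nth.
Qed.

Lemma meval_map_any (R S : fieldType) n (g : R -> S) (q : {mpoly R[n]}) (v : 'I_n -> S) :
  (map_mpoly g q).@[v] = \sum_(m <- msupp q) g q@_m * \prod_i v i ^+ m i.
Proof.
rewrite /map_mpoly /mmap raddf_sum /=; apply: eq_bigr => m _.
by rewrite mmap1_id mevalM mevalC mevalX.
Qed.

Section Main.
Variables (K : fieldType) (n p : nat) (J : 'I_p -> {set 'I_n}).
Variable (L : seq 'X_{1..n}).
Variables (ko : 'I_p -> option nat) (s0 : 'I_p -> 'X_{1..n}).
Variables (AA BB : {mpoly (FK K n)[p]} -> 'X_{1..p} -> {mpoly K[n]}).

Definition TT := (('I_p * bool * 'I_(size L)) + ('I_p * bool))%type.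
Local Notation RR := {mpoly K[#|{: TT}|]}.
Definition XV (t : TT) : RR := 'X_(enum_rank t).
Definition Pg (i : 'I_p) (b : bool) : {mpoly RR[n]} :=
  \sum_(j < size L) XV (inl (i, b, j)) *: 'X_[nth 0%MM L j].
Definition constS (A : {mpoly K[n]}) : {mpoly RR[n]} := map_mpoly (@mpolyC #|{: TT}| K) A.
Definition Nq (q : {mpoly (FK K n)[p]}) : {mpoly RR[n]} :=
  (NDfold (msupp q) (fun m => constS (AA q m)) (fun m => constS (BB q m))
     (fun i => Pg i true) (fun i => Pg i false)).1.
Definition suppJ (i : 'I_p) (s : 'X_{1..n}) : bool :=
  [forall t : 'I_n, (t \notin J i) ==> (s t == 0%N)].
Definition lowc (i : 'I_p) (s : 'X_{1..n}) : bool :=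
  if ko i is Some k then (mdeg s < k)%N else true.
Definition leadc (i : 'I_p) (s : 'X_{1..n}) : bool :=
  if ko i is Some _ then s == s0 i else false.
Definition eqs (ij : 'I_p * 'I_(size L)) : seq RR :=
  let i := ij.1 in let j := ij.2 in let s := nth 0%MM L j in
  [:: if s == 0%MM then XV (inr (i, false)) * XV (inl (i, false, j)) - 1 else 0;
      if suppJ i s then 0 else XV (inl (i, true, j));
      if suppJ i s then 0 else XV (inl (i, false, j));
      if lowc i s then XV (inl (i, true, j)) else 0;
      if leadc i s then XV (inr (i, true)) * XV (inl (i, true, j)) - 1 else 0].
Definition Eall (f : seq {mpoly (FK K n)[p]}) : seq RR :=
  [seq e | ij <- enum {: 'I_p * 'I_(size L)}, e <- eqs ij] ++
  [seq (Nq q)@_s | q <- f, s <- msupp (Nq q)].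

Lemma Eall_P (F : fieldType) (ev : RR -> F) f :
  all (fun e => ev e == 0) (Eall f) <->
  (forall i j, all (fun e => ev e == 0) (eqs (i, j))) /\
  (forall q s, q \in f -> s \in msupp (Nq q) -> ev (Nq q)@_s = 0).
Proof.
rewrite /Eall all_cat; split.
  case/andP => /all_allpairsP h1 /all_allpairsP h2; split.
    move=> i j; apply/allP => e he; apply: (h1 (i, j)) => //; by rewrite enumT mem_index_enum.
  by move=> q s hq hs; apply/eqP; apply: h2.
case=> h1 h2; apply/andP; split; apply/all_allpairsP.
  by case=> i j e _ he; move/allP: (h1 i j); apply.
by move=> q s hq hs; apply/eqP; apply: h2.
Qed.

Lemma coef_Pg (F : fieldType) (ev : {rmorphism RR -> F}) i b (j : 'I_(size L)) :
  uniq L -> (map_mpoly ev (Pg i b))@_(nth 0%MM L j) = ev (XV (inl (i, b, j))).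
Proof. by move=> hL; rewrite mcoeff_map_mpoly coef_sumX_nth. Qed.

Lemma coef_Pg_out (F : fieldType) (ev : {rmorphism RR -> F}) i b s :
  s \notin L -> (map_mpoly ev (Pg i b))@_s = 0.
Proof. move=> hs; rewrite mcoeff_map_mpoly /Pg coef_sumX_out //; exact: raddf0. Qed.


Lemma inL_nth s : s \in L -> exists j : 'I_(size L), nth 0%MM L j = s.
Proof.
move=> hs; have hi : (index s L < size L)%N by rewrite index_mem.
by exists (Ordinal hi); rewrite /= nth_index.
Qed.

Lemma inv_neq0 (F : fieldType) (a b : F) : a * b - 1 == 0 -> b != 0.
Proof. by apply: contraTneq => ->; rewrite mulr0 sub0r oppr_eq0 oner_eq0. Qed.

Lemma sound (F : fieldType) (ev : {rmorphism RR -> F}) i :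
  uniq L -> 0%MM \in L -> (forall k, ko i = Some k -> s0 i \in L /\ mdeg (s0 i) = k) ->
  (forall j, all (fun e => ev e == 0) (eqs (i, j))) ->
  [/\ (map_mpoly ev (Pg i false))@_0%MM != 0,
      poly_in_vars (J i) (map_mpoly ev (Pg i true)),
      poly_in_vars (J i) (map_mpoly ev (Pg i false)) &
      ordP (map_mpoly ev (Pg i true)) (ko i)].
Proof.
move=> hL h0 hs0 heq.
have HE : forall j : 'I_(size L), let s := nth 0%MM L j in
  [/\ s = 0%MM -> ev (XV (inr (i, false))) * ev (XV (inl (i, false, j))) - 1 == 0,
     ~~ suppJ i s -> ev (XV (inl (i, true, j))) == 0,
     ~~ suppJ i s -> ev (XV (inl (i, false, j))) == 0,
     lowc i s -> ev (XV (inl (i, true, j))) == 0 &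
     leadc i s -> ev (XV (inr (i, true))) * ev (XV (inl (i, true, j))) - 1 == 0].
  move=> j s; move: (heq j); rewrite /eqs /= andbT -/s => /and5P [e1 e2 e3 e4 e5]; split.
  - by move=> hs; move: e1; rewrite hs eqxx rmorphB rmorphM rmorph1.
  - by move=> hs; move: e2; rewrite (negbTE hs).
  - by move=> hs; move: e3; rewrite (negbTE hs).
  - by move=> hs; move: e4; rewrite hs.
  - by move=> hs; move: e5; rewrite hs rmorphB rmorphM rmorph1.
have piv : forall b, poly_in_vars (J i) (map_mpoly ev (Pg i b)).
  move=> b; apply/allP => s; rewrite mcoeff_msupp => hs.
  have sL : s \in L by apply: contraR hs => /coef_Pg_out ->.
  have [j hj] := inL_nth sL; move: hs; rewrite -hj coef_Pg //.
  case: (HE j) => _ e2 e3 _ _ hnz.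
  apply/negPn/negP => /[dup] hn /e2 H2; move: (e3 hn) => H3.
  by case: b hnz => /=; rewrite ?H2 ?H3.
split => //.
- have [j hj] := inL_nth h0; rewrite -hj coef_Pg //.
  case: (HE j) => e1 _ _ _ _; exact: inv_neq0 (e1 hj).
- case E: (ko i) => [k|] /=.
  + have [s0L ds0] := hs0 k E; split.
    * move=> s hs; case: (boolP (s \in L)) => sL; last exact: coef_Pg_out.
      have [j hj] := inL_nth sL; rewrite -hj coef_Pg //; apply/eqP.
      case: (HE j) => _ _ _ e4 _; apply: e4; by rewrite /lowc E hj.
    * exists (s0 i); split => //.
      have [j hj] := inL_nth s0L; rewrite -hj coef_Pg //.
      case: (HE j) => _ _ _ _ e5; apply: inv_neq0 (e5 _); by rewrite /leadc E hj.
  + apply/mpolyP => s; rewrite mcoeff0.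
    case: (boolP (s \in L)) => sL; last exact: coef_Pg_out.
    have [j hj] := inL_nth sL; rewrite -hj coef_Pg //; apply/eqP.
    case: (HE j) => _ _ _ e4 _; apply: e4; by rewrite /lowc E.
Qed.


Lemma ev0 (F : fieldType) (ev : {rmorphism RR -> F}) : ev 0 == 0.
Proof. apply/eqP; exact: raddf0. Qed.

Lemma complete (F : fieldType) (ev : {rmorphism RR -> F}) (PF QF : 'I_p -> {mpoly F[n]}) i :
  uniq L ->
  (forall s, s \in msupp (PF i) -> s \in L) -> (forall s, s \in msupp (QF i) -> s \in L) ->
  poly_in_vars (J i) (PF i) -> poly_in_vars (J i) (QF i) -> (QF i)@_0%MM != 0 ->
  (match ko i with
   | None => PF i = 0
   | Some k => (forall s, (mdeg s < k)%N -> (PF i)@_s = 0) /\ (PF i)@_(s0 i) != 0 end) ->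
  (forall j, ev (XV (inl (i, true, j))) = (PF i)@_(nth 0%MM L j)) ->
  (forall j, ev (XV (inl (i, false, j))) = (QF i)@_(nth 0%MM L j)) ->
  ev (XV (inr (i, false))) = ((QF i)@_0%MM)^-1 ->
  ev (XV (inr (i, true))) = ((PF i)@_(s0 i))^-1 ->
  [/\ map_mpoly ev (Pg i true) = PF i, map_mpoly ev (Pg i false) = QF i &
      forall j, all (fun e => ev e == 0) (eqs (i, j))].
Proof.
move=> hL sP sQ vP vQ hQ0 hko hvP hvQ hrQ hrP.
have meq : forall b (G : {mpoly F[n]}), (forall s, s \in msupp G -> s \in L) ->
    (forall j, ev (XV (inl (i, b, j))) = G@_(nth 0%MM L j)) -> map_mpoly ev (Pg i b) = G.
  move=> b G sG hv; apply/mpolyP => s.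
  case: (boolP (s \in L)) => sL.
    by have [j <-] := inL_nth sL; rewrite coef_Pg.
  rewrite coef_Pg_out //; apply/esym/eqP; rewrite mcoeff_eq0.
  by apply: contra sL; apply: sG.
have outv : forall (G : {mpoly F[n]}) s, poly_in_vars (J i) G -> ~~ suppJ i s -> G@_s = 0.
  move=> G s vG hs; apply/eqP; rewrite mcoeff_eq0; apply: contra hs => hs.
  by move/allP: vG => /(_ s hs).
split; [exact: meq|exact: meq|].
move=> j; rewrite /eqs /= andbT; apply/and5P; split.
- case: ifP => [/eqP hs|_]; last exact: ev0.
  by rewrite rmorphB rmorphM rmorph1 hrQ hvQ hs mulVf // subrr.
- case: ifP => [_|hs]; first exact: ev0.
  by rewrite hvP outv // hs.
- case: ifP => [_|hs]; first exact: ev0.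
  by rewrite hvQ outv // hs.
- case: ifP => [hs|_]; last exact: ev0.
  rewrite hvP; move: hs hko; rewrite /lowc; case: (ko i) => [k|] hs.
    by case=> hlow _; rewrite hlow.
  by move=> ->; rewrite mcoeff0.
- case: ifP => [hs|_]; last exact: ev0.
  rewrite rmorphB rmorphM rmorph1 hrP hvP; move: hs hko; rewrite /leadc.
  case: (ko i) => [k|] // /eqP -> [_ hnz].
  by rewrite mulVf // subrr.
Qed.


Lemma map_constS (F : fieldType) (ev : {rmorphism RR -> F}) (g : {rmorphism K -> F}) A :
  (forall c, ev c%:MP = g c) -> map_mpoly ev (constS A) = map_mpoly g A.
Proof.
move=> h; apply/mpolyP => s.
rewrite mcoeff_map_mpoly [RHS]mcoeff_map_mpoly /constS mcoeff_map_mpoly; exact: h.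
Qed.

Lemma q_link (F : fieldType) (ev : {rmorphism RR -> F}) q
    (c : 'X_{1..p} -> {fraction {mpoly F[n]}}) :
  (forall m, m \in msupp q -> map_mpoly ev (constS (BB q m)) != 0 /\
      c m = tofrac (map_mpoly ev (constS (AA q m))) / tofrac (map_mpoly ev (constS (BB q m)))) ->
  (forall i, map_mpoly ev (Pg i false) != 0) ->
  (\sum_(m <- msupp q) c m * \prod_i (tofrac (map_mpoly ev (Pg i true)) /
       tofrac (map_mpoly ev (Pg i false))) ^+ m i == 0)
  = (map_mpoly ev (Nq q) == 0).
Proof.
move=> hc hQ.
pose sg := (@tofrac _ \o map_mpoly ev) : {rmorphism {mpoly RR[n]} -> {fraction {mpoly F[n]}}}.
have [||hD hS] := @NDfoldP _ _ sg _ (msupp q) (fun m => constS (AA q m)) (fun m => constS (BB q m))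
   (fun i => Pg i true) (fun i => Pg i false).
- by move=> m hm; rewrite /sg /= tofrac_eq0; case: (hc m hm).
- by move=> i; rewrite /sg /= tofrac_eq0.
rewrite (eq_big_seq (fun m => sg (constS (AA q m)) / sg (constS (BB q m)) *
    \prod_i (sg (Pg i true) / sg (Pg i false)) ^+ m i)); last first.
  by move=> m hm; case: (hc m hm) => _ ->.
rewrite hS mulf_eq0 invr_eq0 (negbTE hD) orbF /sg /= tofrac_eq0.
done.
Qed.

Lemma Nq_zero (F : fieldType) (ev : {rmorphism RR -> F}) q :
  (map_mpoly ev (Nq q) == 0) = all (fun s => ev (Nq q)@_s == 0) (msupp (Nq q)).
Proof.
apply/eqP/allP.
  by move=> H s _; apply/eqP; rewrite -mcoeff_map_mpoly H mcoeff0.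
move=> H; apply/mpolyP => s; rewrite mcoeff_map_mpoly mcoeff0.
case: (boolP (s \in msupp (Nq q))) => hs; first exact/eqP/H.
move: hs; rewrite mcoeff_msupp negbK => /eqP ->; exact: raddf0.
Qed.

End Main.

Lemma choice_fun (A B : Type) (P : A -> B -> Prop) :
  (forall a, exists b, P a b) -> exists g : A -> B, forall a, P a (g a).
Proof.
move=> h; exists (fun a => proj1_sig (constructive_indefinite_description _ (h a))).
move=> a; exact: proj2_sig.
Qed.

Lemma map_mpoly_idfun (K : fieldType) n (A : {mpoly K[n]}) :
  map_mpoly (idfun : {rmorphism K -> K}) A = A.
Proof. by apply/mpolyP => s; rewrite mcoeff_map_mpoly. Qed.

Theorem proposition1p2 (K K' : fieldType) (phi : {rmorphism K -> K'})
    (Hpure : alg_pure phi) (n p : nat) (J : 'I_p -> {set 'I_n})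
    (f : seq {mpoly (FK K n)[p]})
    (Hf : forall q, q \in f -> forall m, m \in msupp q -> in_loc [set: 'I_n] q@_m)
    (yhat : 'I_p -> FK K' n)
    (Hyhat : forall i, in_loc (J i) (yhat i))
    (Hsol : forall q, q \in f -> (map_mpoly (@map_frac K K' phi n) q).@[yhat] = 0) :
  exists y : 'I_p -> FK K n,
    [/\ forall i, in_loc (J i) (y i),
        forall q, q \in f -> q.@[y] = 0 &
        forall i (o : option nat), has_ord (y i) o <-> has_ord (yhat i) o].
Proof.
have H1 : forall i, exists PQ : {mpoly K'[n]} * {mpoly K'[n]},
    [/\ poly_in_vars (J i) PQ.1, poly_in_vars (J i) PQ.2,
        PQ.2@_0%MM != 0 & yhat i = tofrac PQ.1 / tofrac PQ.2].
  move=> i; have [P [Q [h1 h2 h3 h4]]] := Hyhat i; by exists (P, Q).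
have [PQ hPQ] := choice_fun H1.
have H2 : forall (qm : {mpoly (FK K n)[p]} * 'X_{1..p}), exists AB : {mpoly K[n]} * {mpoly K[n]},
    qm.1 \in f -> qm.2 \in msupp qm.1 ->
    AB.2@_0%MM != 0 /\ qm.1@_qm.2 = tofrac AB.1 / tofrac AB.2.
  case=> q m /=.
  case: (boolP (q \in f)) => hq; last by exists (0, 0) => h; case/negP: hq.
  case: (boolP (m \in msupp q)) => hm; last by exists (0, 0) => _ h; case/negP: hm.
  have [A [B [_ _ hB E]]] := Hf q hq m hm; by exists (A, B).
have [AB0 hAB0] := choice_fun H2.
pose AB q m := AB0 (q, m).
have hAB : forall q m, q \in f -> m \in msupp q ->
    (AB q m).2@_0%MM != 0 /\ q@_m = tofrac (AB q m).1 / tofrac (AB q m).2.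
  by move=> q m; apply: (hAB0 (q, m)).
have H3 : forall i, exists ks : option nat * 'X_{1..n},
    match ks.1 with
    | None => (PQ i).1 = 0
    | Some k => (forall s, (mdeg s < k)%N -> (PQ i).1@_s = 0) /\
                mdeg ks.2 = k /\ (PQ i).1@_ks.2 != 0
    end.
  move=> i; have [[k|] ho] := ordP_ex (PQ i).1.
  - by case: ho => hlow [s [hs hnz]]; exists (Some k, s).
  - by exists (None, 0%MM).
have [ks hks] := choice_fun H3.
pose L := undup (0%MM :: flatten [seq msupp (PQ i).1 ++ msupp (PQ i).2 | i <- enum 'I_p]).
have hL : uniq L := undup_uniq _.
have inL : forall i s, s \in msupp (PQ i).1 ++ msupp (PQ i).2 -> s \in L.
  move=> i s hs; rewrite mem_undup inE; apply/orP; right; apply/flattenP.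
  exists (msupp (PQ i).1 ++ msupp (PQ i).2) => //.
  by apply/mapP; exists i => //; rewrite enumT mem_index_enum.
have inL1 : forall i s, s \in msupp (PQ i).1 -> s \in L.
  by move=> i s hs; apply: (inL i); rewrite mem_cat hs.
have inL2 : forall i s, s \in msupp (PQ i).2 -> s \in L.
  by move=> i s hs; apply: (inL i); rewrite mem_cat hs orbT.
have h0L : 0%MM \in L by rewrite mem_undup mem_head.
pose ko i := (ks i).1; pose s0 i := (ks i).2.
have HKO : forall i, match ko i return Prop with
    | Some k => (forall s, (mdeg s < k)%N -> (PQ i).1@_s = 0) /\ (PQ i).1@_(s0 i) != 0
    | None => (PQ i).1 = 0 end.
  move=> i; move: (hks i); rewrite /ko /s0 /=; case: (ks i).1 => [k [hl [_ hnz]]|] //.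
have hs0 : forall i k, ko i = Some k -> s0 i \in L /\ mdeg (s0 i) = k.
  move=> i k E; rewrite /ko in E; move: (hks i); rewrite E /s0 => -[_ [hd hnz]].
  split; last by [].
  by apply: (inL1 i); rewrite mcoeff_msupp.
have ordPP : forall i, ordP (PQ i).1 (ko i).
  move=> i; move: (hks i); rewrite /ko /s0 /=; case: (ks i).1 => [k [hl [hd hnz]]|] //=.
  by split => //; exists (ks i).2.
pose AA q m := (AB q m).1; pose BB q m := (AB q m).2.
have hAB' : forall q m, q \in f -> m \in msupp q ->
    (BB q m)@_0%MM != 0 /\ q@_m = tofrac (AA q m) / tofrac (BB q m).
  exact: hAB.
clearbody ko s0 AA BB L.
pose w' : TT p L -> K' := fun t => match t with
  | inl (i, b, j) => (if b then (PQ i).1 else (PQ i).2)@_(nth 0%MM L j)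
  | inr (i, b) => if b then ((PQ i).1@_(s0 i))^-1 else ((PQ i).2@_0%MM)^-1 end.
pose v' : 'I_#|{: TT p L}| -> K' := fun k => w' (enum_val k).
have [ev' [hev' hevC hevE]] : exists ev' : {rmorphism {mpoly K[#|{: TT p L}|]} -> K'},
    [/\ forall t, ev' (XV K t) = w' t, forall c, ev' c%:MP = phi c &
        forall e, ev' e = (map_mpoly phi e).@[v']].
  exists (meval v' \o map_mpoly phi); split => //.
  - by move=> t; rewrite /= /XV map_mpolyX mevalXU /v' enum_rankK.
  - by move=> c; rewrite /= map_mpolyC mevalC.

have comp : forall i, [/\ map_mpoly ev' (Pg K L i true) = (PQ i).1,
    map_mpoly ev' (Pg K L i false) = (PQ i).2 &
    forall j, all (fun e => ev' e == 0) (eqs K J ko s0 (i, j))].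
  move=> i; have [h1 h2 h3 h4] := hPQ i.
  have HP : forall j, ev' (XV K (inl (i, true, j))) = (PQ i).1@_(nth 0%MM L j).
    by move=> j; rewrite hev'.
  have HQ : forall j, ev' (XV K (inl (i, false, j))) = (PQ i).2@_(nth 0%MM L j).
    by move=> j; rewrite hev'.
  have HR1 : ev' (XV K (inr (i, false))) = ((PQ i).2@_0%MM)^-1 by rewrite hev'.
  have HR2 : ev' (XV K (inr (i, true))) = ((PQ i).1@_(s0 i))^-1 by rewrite hev'.
  exact: (@complete K n p J L ko s0 K' ev' (fun i => (PQ i).1) (fun i => (PQ i).2) i
    hL (inL1 i) (inL2 i) h1 h2 h3 (HKO i) HP HQ HR1 HR2).
have hE' : all (fun e => ev' e == 0) (Eall J L ko s0 AA BB f).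
  apply/Eall_P; split; first by move=> i j; case: (comp i).
  move=> q s hq hs.
  have Hc : forall m, m \in msupp q ->
      map_mpoly ev' (constS p L (BB q m)) != 0 /\
      map_frac phi q@_m = tofrac (map_mpoly ev' (constS p L (AA q m))) /
                          tofrac (map_mpoly ev' (constS p L (BB q m))).
    move=> m hm; have [hB hq'] := hAB' q m hq hm.
    have e1 := map_constS (BB q m) hevC.
    have e2 := map_constS (AA q m) hevC.
    have hB' : BB q m != 0 := mcoeff0_neq0 hB.
    split; first by rewrite e1; exact: map_mpoly_neq0.
    rewrite hq' (map_fracE phi (AA q m) hB').
    by rewrite -[map_mpoly phi (AA q m)]e2 -[map_mpoly phi (BB q m)]e1.
  have HQ : forall i, map_mpoly ev' (Pg K L i false) != 0.
    move=> i; case: (comp i) => _ -> _; case: (hPQ i) => _ _ h3 _.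
    exact: mcoeff0_neq0 h3.
  have HH := @q_link K n p L AA BB K' ev' q (fun m => map_frac phi q@_m) Hc HQ.
  have HS : \sum_(m <- msupp q) map_frac phi q@_m * \prod_i (tofrac (map_mpoly ev' (Pg K L i true)) /
       tofrac (map_mpoly ev' (Pg K L i false))) ^+ m i == 0.
    apply/eqP; rewrite -[RHS](Hsol q hq) meval_map_any; apply: eq_bigr => m _.
    congr (_ * _); apply: eq_bigr => i _.
    by case: (comp i) => -> -> _; case: (hPQ i) => _ _ _ ->.
  move: HS; rewrite HH Nq_zero => /allP /(_ s hs) /eqP.
  done.
have hE'' : all (fun e => (map_mpoly phi e).@[v'] == 0) (Eall J L ko s0 AA BB f).
  by apply: sub_all hE' => e; rewrite hevE.
have [v hv] := Hpure _ _ (ex_intro _ v' hE'').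
have [ev [hevE2 hevC2]] : exists ev : {rmorphism {mpoly K[#|{: TT p L}|]} -> K},
    (forall e, ev e = e.@[v]) /\ (forall c, ev c%:MP = (idfun : {rmorphism K -> K}) c).
  by exists (meval v); split => // c; rewrite /= mevalC.
have [hsE hsQ] : (forall i j, all (fun e => ev e == 0) (eqs K J ko s0 (i, j))) /\
    (forall q s, q \in f -> s \in msupp (Nq L AA BB q) -> ev (Nq L AA BB q)@_s = 0).
  apply/(Eall_P J ko s0 AA BB ev f); by apply: sub_all hv => e; rewrite hevE2.
have snd : forall i, _ := fun i => sound hL h0L (hs0 i) (hsE i).
exists (fun i => tofrac (map_mpoly ev (Pg K L i true)) / tofrac (map_mpoly ev (Pg K L i false))).
split.
- move=> i; case: (snd i) => a b c _.
  by exists (map_mpoly ev (Pg K L i true)), (map_mpoly ev (Pg K L i false)); split.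
- move=> q hq; rewrite mevalE; apply/eqP.
  have Hc : forall m, m \in msupp q ->
      map_mpoly ev (constS p L (BB q m)) != 0 /\
      q@_m = tofrac (map_mpoly ev (constS p L (AA q m))) /
             tofrac (map_mpoly ev (constS p L (BB q m))).
    move=> m hm; have [hB hq'] := hAB' q m hq hm.
    have e1 := map_constS (BB q m) hevC2.
    have e2 := map_constS (AA q m) hevC2.
    rewrite map_mpoly_idfun in e1; rewrite map_mpoly_idfun in e2.
    split; first by rewrite e1; exact: mcoeff0_neq0.
    rewrite hq'; congr (tofrac _ / tofrac _); [exact/esym/e2 | exact/esym/e1].
  have HQ : forall i, map_mpoly ev (Pg K L i false) != 0.
    by move=> i; case: (snd i) => a _ _ _; exact: mcoeff0_neq0 a.
  have HH := @q_link K n p L AA BB K ev q (fun m => q@_m) Hc HQ.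
  rewrite HH Nq_zero; apply/allP => s hs; apply/eqP; exact: hsQ.
- move=> i o; case: (snd i) => a _ _ d; rewrite /= (has_ord_frac a d).
  by case: (hPQ i) => _ _ h3 ->; rewrite (has_ord_frac h3 (ordPP i)).
Qed.
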